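(* In the root system $B_n$, every quartet $\{r_1, r, s, s_1\}$ is a mono-quartet, i.e. the vectors $s - r_1$ and $r - r_1$ are never both roots.
   Context: Fix simple roots of $B_n$; the height of a root is the sum of its coefficients in the simple roots. The regular ordering $\prec$ of positive roots orders them by height, and roots of equal height lexicographically by coefficient vectors. An ordered pair $\{r,s\}$ of positive roots is special if $r+s\in\varPhi$ and $0\prec r\prec s$; a special pair $\{r_1,s_1\}$ is extraspecial if $r_1 \preceq r$ for every special pair $\{r,s\}$ with $r+s=r_1+s_1$. A quartet is an ordered set $\{r_1,r,s,s_1\}$ where $\{r_1,s_1\}$ is extraspecial, $\{r,s\}$ is a special, non-extraspecial pair with $r+s=r_1+s_1$, and $0\prec r_1\prec r\prec s\prec s_1$. *)

(* Defs.v *)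
From mathcomp Require Import all_boot all_order all_algebra.
Set Implicit Arguments. Unset Strict Implicit. Unset Printing Implicit Defensive.
Import Order.TTheory GRing.Theory Num.Theory.
Local Open Scope ring_scope.

(* Root system B_n realized in Z^n (standard basis e_0,...,e_{n-1}):
   roots are +-e_i and +-e_i +- e_j (i <> j), i.e. nonzero vectors with
   entries in {-1,0,1} and at most two nonzero entries.
   Simple roots: a_k = e_k - e_{k+1} (k < n-1) and a_{n-1} = e_{n-1}.
   The coefficient of a_k in v is v_0 + ... + v_k. *)

Definition vec (n : nat) := {ffun 'I_n -> int}.

Definition is_root n (v : vec n) : bool :=
  [&& [exists i, v i != 0],
      [forall i, (v i == 0) || (v i == 1) || (v i == -1)] &
      (#|[set i | v i != 0]| <= 2)%N].

Definition coef n (v : vec n) : vec n :=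
  [ffun k : 'I_n => \sum_(j < n | (j <= k)%N) v j].

Definition height n (v : vec n) : int := \sum_(k < n) coef v k.

Definition positive n (v : vec n) : bool :=
  is_root v && [forall k, 0 <= coef v k].

Definition lexlt n (c d : vec n) : Prop :=
  exists k : 'I_n, (forall j : 'I_n, (j < k)%N -> c j = d j) /\ c k < d k.

Definition prec n (r s : vec n) : Prop :=
  height r < height s \/ (height r = height s /\ lexlt (coef r) (coef s)).

Definition preceq n (r s : vec n) : Prop := r = s \/ prec r s.

Definition special n (r s : vec n) : Prop :=
  positive r /\ positive s /\ is_root (r + s) /\ prec r s.

Definition extraspecial n (r1 s1 : vec n) : Prop :=
  special r1 s1 /\
  forall r s : vec n, special r s -> r + s = r1 + s1 -> preceq r1 r.

Definition quartet n (r1 r s s1 : vec n) : Prop :=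
  [/\ extraspecial r1 s1, special r s, ~ extraspecial r s,
      r + s = r1 + s1 & [/\ prec r1 r, prec r s & prec s s1]].

Definition mono_quartet n (r1 r s s1 : vec n) : Prop :=
  ~ (is_root (s - r1) /\ is_root (r - r1)).

(* Main.v *)
Require Import Defs.
From mathcomp Require Import all_boot all_order all_algebra.
From mathcomp Require Import zify ring lra.
Set Implicit Arguments. Unset Strict Implicit. Unset Printing Implicit Defensive.
Import Order.TTheory GRing.Theory Num.Theory.
Local Open Scope ring_scope.

Definition NN n (f : 'I_n -> int) : int := \sum_i f i * f i.
Definition DD n (f g : 'I_n -> int) : int := \sum_i f i * g i.

Lemma NN_root n (v : vec n) : is_root v -> NN v = 1 \/ NN v = 2.
Proof.
case/and3P=> /existsP [i0 hi0] /forallP hv hc.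
have E : NN v = (#|[set i | v i != 0]|)%:R.
  rewrite /NN -sumr_const [RHS]big_mkcond /=.
apply: eq_bigr => i _.
  rewrite inE; have := hv i.
  by case/orP=> [/orP [] | ] /eqP ->.
have h1 : (0 < #|[set i | v i != 0]|)%N by apply/card_gt0P; exists i0; rewrite inE.
rewrite E; move: h1 hc; case: #|_| => [|[|[|k]]] //= _ _; by [left|right].
Qed.

Lemma quad n (f g h : 'I_n -> int) (k l m : int) :
  \sum_i (k * f i + l * g i + m * h i) * (k * f i + l * g i + m * h i) =
  k * k * NN f + l * l * NN g + m * m * NN h + 2 * k * l * DD f g + 2 * k * m * DD f h + 2 * l * m * DD g h.
Proof.
rewrite /NN /DD !mulr_sumr -!big_split /=; apply: eq_bigr => i _; ring.
Qed.

Lemma arith (p q w a b c : int) :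
  w = 1 \/ w = 2 ->
  q = 1 \/ q = 2 ->
  p + q + w + 2 * a + 2 * b + 2 * c = 1 \/
  p + q + w + 2 * a + 2 * b + 2 * c = 2 ->
  2 * 2 * p + q + w + 2 * 2 * a + 2 * 2 * b + 2 * c = 1 \/
  2 * 2 * p + q + w + 2 * 2 * a + 2 * 2 * b + 2 * c = 2 ->
  p + w + 2 * b = 1 \/ p + w + 2 * b = 2 ->
  p + q + 2 * a = 1 \/ p + q + 2 * a = 2 -> p = 1 \/ p = 2 -> False.
Proof. lia. Qed.

Theorem mainTheorem3 (n : nat) (hn : (2 <= n)%N) (r1 r s s1 : vec n) :
  quartet r1 r s s1 -> mono_quartet r1 r s s1.
Proof.
case=> [[[pr1 [ps1' [_ _]]] _] [pr [ps [pt _]]] _ Hsum [_ _ _]] [ry rx].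
have ps1 : is_root s1 by case/andP: ps1'.
set x := r - r1; set y := s - r1.
have Er : forall i, r i = 1 * r1 i + 1 * x i + 0 * y i.
  by move=> i; rewrite /x !ffunE; ring.
have Es : forall i, s i = 1 * r1 i + 0 * x i + 1 * y i.
  by move=> i; rewrite /y !ffunE; ring.
have Et : forall i, (r + s) i = 2 * r1 i + 1 * x i + 1 * y i.
  by move=> i; rewrite /x /y !ffunE; ring.
have Es1 : forall i, s1 i = 1 * r1 i + 1 * x i + 1 * y i.
  move=> i; have := congr1 (fun f : vec n => f i) Hsum; rewrite /x /y !ffunE => E.
  have -> : s1 i = r i + s i - r1 i by rewrite E; ring.
  ring.
have Nr : NN r = _ := eq_trans (eq_bigr _ (fun i _ => congr2 *%R (Er i) (Er i))) (quad _ _ _ _ _ _).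
have Ns : NN s = _ := eq_trans (eq_bigr _ (fun i _ => congr2 *%R (Es i) (Es i))) (quad _ _ _ _ _ _).
have Nt : NN (r + s) = _ := eq_trans (eq_bigr _ (fun i _ => congr2 *%R (Et i) (Et i))) (quad _ _ _ _ _ _).
have Ns1 : NN s1 = _ := eq_trans (eq_bigr _ (fun i _ => congr2 *%R (Es1 i) (Es1 i))) (quad _ _ _ _ _ _).
have := NN_root (proj1 (andP pr1)); have := NN_root (proj1 (andP pr));
have := NN_root (proj1 (andP ps)); have := NN_root pt; have := NN_root ps1;
have := NN_root rx; have := NN_root ry.
rewrite Nr Ns Nt Ns1.
rewrite -/x -/y. move: (NN r1) (NN x) (NN y) (DD r1 x) (DD r1 y) (DD x y) => p q w a b c.
rewrite !(mulr1, mul1r, mulr0, mul0r, addr0, add0r). exact: arith.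
Qed.
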